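(* Let $\mathbb{X}$ be an algebra with identity (not necessarily normed) over a field $\mathcal{F}$, let $\mathcal{G}$ be its group of units, let $k\ge1$ be an integer, let $a_0,\dots,a_k,b_0,\dots,b_k\in\mathbb{X}$, and let $g_n:\mathbb{X}\to\mathbb{X}$, $n\ge 0$, be arbitrary functions. Consider $$x_{n+1}=\sum_{i=0}^{k}a_ix_{n-i}+g_n\Big(\sum_{i=0}^{k}b_ix_{n-i}\Big),\quad n\ge0. \tag{E}$$ Suppose the polynomials $$P(\xi)=\xi^{k+1}-\sum_{i=0}^{k}a_i\xi^{k-i},\qquad Q(\xi)=\sum_{i=0}^{k}b_i\xi^{k-i}$$ have a common root $\rho\in\mathcal{G}$, i.e. $P(\rho)=Q(\rho)=0$. For $i=0,\dots,k-1$ put $$p_i=\rho^{i+1}-a_0\rho^i-a_1\rho^{i-1}-\cdots-a_i,\qquad q_i=b_0\rho^i+b_1\rho^{i-1}+\cdots+b_i.$$ Then each solution $\{x_n\}$ of (E) with initial values $x_0,\dots,x_{-k}\in\mathbb{X}$ satisfies $x_{n+1}=\rho x_n+t_{n+1}$ for all $n\ge -k$, where $\{t_n\}_{n\ge -k+1}$ is the unique solution of the order-$k$ equation $$t_{n+1}=-\sum_{i=0}^{k-1}p_it_{n-i}+g_n\Big(\sum_{i=0}^{k-1}q_it_{n-i}\Big),\quad n\ge0, \tag{F}$$ with initial values $t_{-i}=x_{-i}-\rho x_{-i-1}$, $i=0,1,\dots,k-1$. Conversely, if $\{t_n\}$ is a solution of (F) with initial values $t_0,\dots,t_{-k+1}\in\mathbb{X}$,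 and $x_{-k}\in\mathbb{X}$ is arbitrary, then the sequence defined by $x_{m+1}=\rho x_m+t_{m+1}$ for $m\ge -k$ is a solution of (E).
   Context: In the possibly noncommutative algebra $\mathbb{X}$, polynomials are evaluated with coefficients written on the left, e.g. $P(\rho)=\rho^{k+1}-\sum_{i=0}^k a_i\rho^{k-i}$. An element $u$ is a unit if it has a two-sided inverse $u^{-1}$; $\mathcal{G}$ denotes the set of units. *)

(* Defs.v *)
From HB Require Import structures.
From mathcomp Require Import all_boot all_order all_algebra.
Set Implicit Arguments. Unset Strict Implicit. Unset Printing Implicit Defensive.
Import Order.TTheory GRing.Theory Num.Theory.
Local Open Scope ring_scope.

(* Polynomials with left coefficients, evaluated at rho (noncommutative). *)
Definition Pev (X : nzRingType) (k : nat) (a : nat -> X) (rho : X) : X :=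
  rho ^+ k.+1 - \sum_(i < k.+1) a i * rho ^+ (k - i).
Definition Qev (X : nzRingType) (k : nat) (b : nat -> X) (rho : X) : X :=
  \sum_(i < k.+1) b i * rho ^+ (k - i).

Definition pcoef (X : nzRingType) (a : nat -> X) (rho : X) (i : nat) : X :=
  rho ^+ i.+1 - \sum_(j < i.+1) a j * rho ^+ (i - j).
Definition qcoef (X : nzRingType) (b : nat -> X) (rho : X) (i : nat) : X :=
  \sum_(j < i.+1) b j * rho ^+ (i - j).

Definition is_unit (X : nzRingType) (u : X) : Prop :=
  exists v : X, u * v = 1 /\ v * u = 1.

Definition solves_E (X : nzRingType) (k : nat) (a b : nat -> X)
  (g : nat -> X -> X) (x : int -> X) : Prop :=
  forall n : nat,
    x (n%:Z + 1) = \sum_(i < k.+1) a i * x (n%:Z - i%:Z)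
                   + g n (\sum_(i < k.+1) b i * x (n%:Z - i%:Z)).

Definition solves_F (X : nzRingType) (k : nat) (a b : nat -> X) (rho : X)
  (g : nat -> X -> X) (t : int -> X) : Prop :=
  forall n : nat,
    t (n%:Z + 1) = - (\sum_(i < k) pcoef a rho i * t (n%:Z - i%:Z))
                   + g n (\sum_(i < k) qcoef b rho i * t (n%:Z - i%:Z)).

(* Main.v *)
Require Import Defs.
From HB Require Import structures.
From mathcomp Require Import all_boot all_order all_algebra zify.
Import Order.TTheory GRing.Theory Num.Theory.
Local Open Scope ring_scope.

Lemma sumrho (X : nzRingType) (c : nat -> X) (rho : X) K :
  \sum_(j < K.+2) c j * rho ^+ (K.+1 - j) =
  (\sum_(j < K.+1) c j * rho ^+ (K - j)) * rho + c K.+1.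
Proof.
rewrite big_ord_recr /= subnn expr0 mulr1 mulr_suml; congr (_ + _).
by apply: eq_bigr => j _; rewrite -mulrA -exprSr subSn // -ltnS.
Qed.

Lemma pcoef_rec (X : nzRingType) (a : nat -> X) rho K :
  pcoef a rho K.+1 = pcoef a rho K * rho - a K.+1.
Proof. by rewrite /pcoef sumrho mulrBl -exprSr opprD addrA. Qed.

Lemma qcoef_rec (X : nzRingType) (b : nat -> X) rho K :
  qcoef b rho K.+1 = qcoef b rho K * rho + b K.+1.
Proof. by rewrite /qcoef sumrho. Qed.

Lemma psum (X : nzRingType) (a : nat -> X) rho (x : int -> X) (n : int) K :
  \sum_(i < K.+1) pcoef a rho i * (x (n - i%:Z) - rho * x (n - i%:Z - 1)) =
  rho * x n - \sum_(i < K.+1) a i * x (n - i%:Z)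
  - pcoef a rho K * rho * x (n - K%:Z - 1).
Proof.
elim: K => [|K IH].
  rewrite !big_ord1 /pcoef big_ord1 expr1 subnn expr0 mulr1 !subr0.
  by rewrite mulrBr !mulrBl !mulrA.
rewrite big_ord_recr /= IH [in RHS]big_ord_recr /= pcoef_rec.
have -> : n - (K.+1)%:Z = n - K%:Z - 1 by lia.
move: (x (n - K%:Z - 1)) (x (n - K%:Z - 1 - 1)) (pcoef a rho K) => y z P.
rewrite !mulrBr !mulrBl !mulrA.
move: (rho * x n) (\sum_(i < K.+1) a i * x (n - i%:Z)) (P * rho * y) (a K.+1 * y)
  (P * rho * rho * z - a K.+1 * rho * z) => A B C D E.
by rewrite opprD !addrA subrK.
Qed.

Lemma qsum (X : nzRingType) (b : nat -> X) rho (x : int -> X) (n : int) K :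
  \sum_(i < K.+1) qcoef b rho i * (x (n - i%:Z) - rho * x (n - i%:Z - 1)) =
  \sum_(i < K.+1) b i * x (n - i%:Z) - qcoef b rho K * rho * x (n - K%:Z - 1).
Proof.
elim: K => [|K IH].
  rewrite !big_ord1 /qcoef big_ord1 subnn expr0 mulr1 !subr0.
  by rewrite mulrBr mulrA.
rewrite big_ord_recr /= IH [in RHS]big_ord_recr /= qcoef_rec.
have -> : n - (K.+1)%:Z = n - K%:Z - 1 by lia.
move: (x (n - K%:Z - 1)) (x (n - K%:Z - 1 - 1)) (qcoef b rho K) => y z P.
rewrite !mulrBr !mulrDl !mulrA.
move: (\sum_(i < K.+1) b i * x (n - i%:Z)) (P * rho * y) (b K.+1 * y)
  (P * rho * rho * z + b K.+1 * rho * z) => A C D E.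
by rewrite !addrA subrK.
Qed.


Lemma aid (X : nzRingType) (a : nat -> X) rho (x : int -> X) (n : int) K :
  Pev K.+1 a rho = 0 ->
  \sum_(i < K.+2) a i * x (n - i%:Z) =
  rho * x n - \sum_(i < K.+1) pcoef a rho i * (x (n - i%:Z) - rho * x (n - i%:Z - 1)).
Proof.
move=> hP.
have hp : pcoef a rho K * rho = a K.+1.
  by apply/eqP; rewrite -subr_eq0 -pcoef_rec; apply/eqP.
rewrite psum hp big_ord_recr /=.
have -> : n - (K.+1)%:Z = n - K%:Z - 1 by lia.
move: (rho * x n) (\sum_(i < K.+1) a i * x (n - i%:Z)) (a K.+1 * x (n - K%:Z - 1)) => A S c.
by rewrite !opprD !opprK !addrA addrN add0r.
Qed.

Lemma bid (X : nzRingType) (b : nat -> X) rho (x : int -> X) (n : int) K :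
  Qev K.+1 b rho = 0 ->
  \sum_(i < K.+2) b i * x (n - i%:Z) =
  \sum_(i < K.+1) qcoef b rho i * (x (n - i%:Z) - rho * x (n - i%:Z - 1)).
Proof.
move=> hQ.
have hq : - (qcoef b rho K * rho) = b K.+1.
  by apply/eqP; rewrite eq_sym -subr_eq0 opprK addrC -qcoef_rec; apply/eqP.
rewrite qsum -mulNr hq big_ord_recr /=.
have -> : n - (K.+1)%:Z = n - K%:Z - 1 by lia.
by [].
Qed.

Theorem lemma3 (F : fieldType) (X : algType F) (k : nat) (hk : (1 <= k)%N)
  (a b : nat -> X) (g : nat -> X -> X) (rho : X)
  (hrho : is_unit rho) (hP : Pev k a rho = 0) (hQ : Qev k b rho = 0) :
  (forall x : int -> X, solves_E k a b g x ->
     forall t : int -> X, solves_F k a b rho g t ->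
       (forall i : nat, (i < k)%N ->
          t (- i%:Z) = x (- i%:Z) - rho * x (- i%:Z - 1)) ->
       forall n : int, - k%:Z <= n -> x (n + 1) = rho * x n + t (n + 1))
  /\
  (forall t : int -> X, solves_F k a b rho g t ->
     forall x : int -> X,
       (forall m : int, - k%:Z <= m -> x (m + 1) = rho * x m + t (m + 1)) ->
       solves_E k a b g x).
Proof.
case: k hk hP hQ => [//|K] _ hP hQ; split.
  move=> x hE t hF hinit.
  have key : forall N i : nat, (i <= N)%N ->
      t (i%:Z - K.+1%:Z + 1) = x (i%:Z - K.+1%:Z + 1) - rho * x (i%:Z - K.+1%:Z + 1 - 1).
    elim=> [|N IH] i hi.
      have -> : i%:Z - K.+1%:Z + 1 = - K%:Z by lia.
      by rewrite hinit.
    case: (ltnP i K.+1) => hiK.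
      have -> : i%:Z - K.+1%:Z + 1 = - (K - i)%:Z by lia.
      by rewrite hinit //; lia.
    have -> : i%:Z - K.+1%:Z + 1 = (i - K.+1)%:Z + 1 by lia.
    rewrite hF hE (@aid _ _ _ _ _ _ hP) (@bid _ _ _ _ _ _ hQ).
    have eqs : forall j : 'I_K.+1, t ((i - K.+1)%:Z - j%:Z) =
        x ((i - K.+1)%:Z - j%:Z) - rho * x ((i - K.+1)%:Z - j%:Z - 1).
      move=> j.
      have := IH (i - 1 - j)%N; have -> : (i - 1 - j)%:Z - K.+1%:Z + 1 = (i - K.+1)%:Z - j%:Z.
        have := ltn_ord j; lia.
      move=> -> //; lia.
    rewrite (eq_bigr (fun j : 'I_K.+1 => pcoef a rho j * (x ((i - K.+1)%:Z - j%:Z) - rho * x ((i - K.+1)%:Z - j%:Z - 1)))); last first.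
      move=> j _. congr (_ * _); exact: eqs.
    rewrite [in g _ _](eq_bigr (fun j : 'I_K.+1 => qcoef b rho j * (x ((i - K.+1)%:Z - j%:Z) - rho * x ((i - K.+1)%:Z - j%:Z - 1)))); last first.
      move=> j _; congr (_ * _); exact: eqs.
    rewrite addrK.
    move: (rho * x (i - K.+1)%:Z) => A.
    by rewrite addrAC (addrAC A) subrr add0r.
  move=> n hn.
  have [i hi] : exists i : nat, n = i%:Z - K.+1%:Z by exists (absz (n + K.+1%:Z)); lia.
  rewrite hi (key i i (leqnn i)).
  have -> : i%:Z - K.+1%:Z + 1 - 1 = i%:Z - K.+1%:Z by lia.
  by rewrite [RHS]addrC subrK.
move=> t hF x hx n.
have ht : forall m : int, - K%:Z <= m -> t m = x m - rho * x (m - 1).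
  move=> m hm; have h := hx (m - 1) ltac:(lia); rewrite subrK in h.
  by rewrite h [rho * _ + _]addrC addrK.
rewrite hx; last by lia.
rewrite hF (@aid _ _ _ _ _ _ hP) (@bid _ _ _ _ _ _ hQ).
have eqs : forall j : 'I_K.+1, t (n%:Z - j%:Z) =
    x (n%:Z - j%:Z) - rho * x (n%:Z - j%:Z - 1).
  move=> j; apply: ht; have := ltn_ord j; lia.
rewrite (eq_bigr (fun j : 'I_K.+1 => pcoef a rho j * (x (n%:Z - j%:Z) - rho * x (n%:Z - j%:Z - 1)))); last first.
  move=> j _; congr (_ * _); exact: eqs.
rewrite [in g _ _](eq_bigr (fun j : 'I_K.+1 => qcoef b rho j * (x (n%:Z - j%:Z) - rho * x (n%:Z - j%:Z - 1)))); last first.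
  move=> j _; congr (_ * _); exact: eqs.
by rewrite !addrA.
Qed.
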